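(* Let $\mathbb S[\boldsymbol\kappa]$ be a Hurwitz-stable Child-Selection matrix that contains an unstable-positive feedback as a principal submatrix. Then $\mathbb S[\boldsymbol\kappa]$ is $D$-Hopf.
   Context: For a reaction network with reactant coefficients $s^j_m$ and stoichiometric matrix $\mathbb S$, a $k$-Child-Selection $\boldsymbol\kappa=(\kappa,E_\kappa,J)$ is a bijection $J:\kappa\to E_\kappa$ between $k$ species and $k$ reactions with $s^{J(m)}_m>0$; its CS-matrix is $\mathbb S[\boldsymbol\kappa]_{ml}=\mathbb S_{m,J(l)}$. Hurwitz-stable: all eigenvalues have negative real part; Hurwitz-unstable: some eigenvalue has positive real part. An unstable core is a Hurwitz-unstable CS-matrix with no Hurwitz-unstable proper principal submatrix; a $k\times k$ unstable core is an unstable-positive feedback if $\operatorname{sign}\det=(-1)^{k-1}$ and an unstable-negative feedback if $\operatorname{sign}\det=(-1)^k$. Inertia: numbers of eigenvalues with negative, positive, zero real part. $A$ is $D$-Hopf if there exist an invertible principal submatrix $A[\kappa]$ and positive diagonal $D_1,D_2$ with $\operatorname{inertia}(A[\kappa]D_1)\ne\operatorname{inertia}(A[\kappa]D_2)$. *)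

(* Defs.v *)
From HB Require Import structures.
From mathcomp Require Import all_boot all_order all_algebra.
From mathcomp Require Import complex.
Set Implicit Arguments.
Unset Strict Implicit.
Unset Printing Implicit Defensive.
Import Order.TTheory GRing.Theory Num.Theory.
Local Open Scope ring_scope.

Section Defs.
Variable R : rcfType.

Definition cplx_mx m n (A : 'M[R]_(m, n)) : 'M[R[i]]_(m, n) :=
  map_mx (real_complex R) A.

Definition is_eig n (A : 'M[R]_n) (z : R[i]) : Prop := eigenvalue (cplx_mx A) z.

Definition Hurwitz_stable n (A : 'M[R]_n) : Prop :=
  forall z, is_eig A z -> complex.Re z < 0.

Definition Hurwitz_unstable n (A : 'M[R]_n) : Prop :=
  exists z, is_eig A z /\ 0 < complex.Re z.

(* eigenvalues counted with algebraic multiplicity: the roots of the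
   (monic) characteristic polynomial of the complexified matrix *)
Definition eigs n (A : 'M[R]_n) : seq R[i] :=
  sval (closed_field_poly_normal (char_poly (cplx_mx A))).

Definition inertia n (A : 'M[R]_n) : nat * nat * nat :=
  (count (fun z => complex.Re z < 0) (eigs A),
   count (fun z => 0 < complex.Re z) (eigs A),
   count (fun z => complex.Re z == 0) (eigs A)).

Definition psub n (A : 'M[R]_n) (I : {set 'I_n}) : 'M[R]_#|I| :=
  \matrix_(i, j) A (enum_val i) (enum_val j).

Definition unstable_core n (A : 'M[R]_n) : Prop :=
  Hurwitz_unstable A /\
  forall I : {set 'I_n}, I \proper [set: 'I_n] -> ~ Hurwitz_unstable (psub A I).

Definition unstable_positive_feedback k (A : 'M[R]_k) : Prop :=
  unstable_core A /\ Num.sg (\det A) = (-1) ^+ k.-1.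

Definition unstable_negative_feedback k (A : 'M[R]_k) : Prop :=
  unstable_core A /\ Num.sg (\det A) = (-1) ^+ k.

Definition DHopf n (A : 'M[R]_n) : Prop :=
  exists I : {set 'I_n},
    \det (psub A I) != 0 /\
    exists d1 d2 : 'rV[R]_#|I|,
      (forall i, 0 < d1 0 i) /\ (forall i, 0 < d2 0 i) /\
      inertia (psub A I *m diag_mx d1) <> inertia (psub A I *m diag_mx d2).

(* Reaction network with nS species and nE reactions: reactant coefficients
   s (nonnegative) and stoichiometric matrix S. *)
Definition reaction_network nS nE (s : 'M[R]_(nS, nE)) : Prop :=
  forall m j, 0 <= s m j.

(* k-Child-Selection: species kappa = image of f, reactions E_kappa = image
   of g (both injective, k elements each), bijection J : f l |-> g l,
   with s_{f l}^{J(f l)} > 0. *)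
Definition child_selection nS nE k (s : 'M[R]_(nS, nE))
    (f : 'I_k -> 'I_nS) (g : 'I_k -> 'I_nE) : Prop :=
  injective f /\ injective g /\ forall l, 0 < s (f l) (g l).

Definition CSmx nS nE k (S : 'M[R]_(nS, nE))
    (f : 'I_k -> 'I_nS) (g : 'I_k -> 'I_nE) : 'M[R]_k :=
  \matrix_(m, l) S (f m) (g l).

End Defs.

(* Main.v *)
Require Import Defs.
From HB Require Import structures.
From mathcomp Require Import all_boot all_order all_algebra.
From mathcomp Require Import complex polyrcf perm fingroup.
From mathcomp Require Import lra.
Import Order.TTheory GRing.Theory Num.Theory.
Local Open Scope ring_scope.
Set Implicit Arguments.

Lemma det_reindex (R : comNzRingType) a b (h : 'I_a -> 'I_b) (M : 'M[R]_b) :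
  a = b -> injective h -> \det (\matrix_(i, j) M (h i) (h j)) = \det M.
Proof.
move=> eab; subst b => hinj.
pose s := perm hinj.
have -> : \matrix_(i, j) M (h i) (h j) = row_perm s (col_perm s M).
  by apply/matrixP => i j; rewrite !mxE !permE.
rewrite row_permE col_permE !det_mulmx !det_perm odd_permV.
by rewrite mulrCA -expr2 sqrr_sign mulr1.
Qed.

Lemma det_unitcols (R : rcfType) n (M : 'M[R]_n) (J : {set 'I_n}) c :
  (forall i j, j \in J -> M i j = (i == j)%:R * c) ->
  \det M = c ^+ #|J| * \det (psub M (~: J)).
Proof.
move=> HM.
pose h (k : 'I_(#|~: J| + #|J|)) : 'I_n :=
  match split k with inl i => enum_val i | inr j => enum_val j end.
have hl i : h (lshift _ i) = enum_val i.
  by rewrite /h -[lshift _ i]/(unsplit (inl i)) unsplitK.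
have hr i : h (rshift _ i) = enum_val i.
  by rewrite /h -[rshift _ i]/(unsplit (inr i)) unsplitK.
have hinj : injective h.
  move=> x y; rewrite /h; case: splitP => [i Ei|i Ei]; case: splitP => [j Ej|j Ej].
  - by move/enum_val_inj=> eij; apply: ord_inj; rewrite Ei Ej eij.
  - by move=> e; have := enum_valP i; rewrite e inE (enum_valP j).
  - by move=> e; have := enum_valP j; rewrite -e inE (enum_valP i).
  - by move/enum_val_inj=> eij; apply: ord_inj; rewrite Ei Ej eij.
have ecard : (#|~: J| + #|J| = n)%N by rewrite addnC cardsC card_ord.
rewrite -(@det_reindex _ _ _ h M ecard hinj).
set N := \matrix_(i, j) M (h i) (h j).
have Eur : ursubmx N = 0.
  apply/matrixP => i j; rewrite !mxE hl hr HM ?enum_valP //.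
  case: eqP => [e|]; last by rewrite mul0r.
  by have := enum_valP i; rewrite e inE (enum_valP j).
have Edr : drsubmx N = c%:M.
  apply/matrixP => i j; rewrite !mxE !hr HM ?enum_valP //.
  by rewrite (inj_eq enum_val_inj) mulrC mulr_natr.
have Eul : ulsubmx N = psub M (~: J).
  by apply/matrixP => i j; rewrite !mxE !hl.
by rewrite -[N]submxK Eur Edr Eul det_lblock det_scalar mulrC.
Qed.

Lemma char_poly_horner (R : comNzRingType) n (M : 'M[R]_n) t :
  (char_poly M).[t] = \det (t%:M - M).
Proof.
rewrite /char_poly -horner_evalE -det_map_mx; congr (\det _).
by apply/matrixP=> i j; rewrite !mxE /= horner_evalE hornerD hornerN hornerMn hornerX hornerC.
Qed.

Lemma char_poly_reindex (R : comNzRingType) a b (h : 'I_a -> 'I_b) (M : 'M[R]_b) :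
  a = b -> injective h -> char_poly (\matrix_(i, j) M (h i) (h j)) = char_poly M.
Proof.
move=> eab hinj; rewrite /char_poly -(@det_reindex _ _ _ h _ eab hinj).
by congr (\det _); apply/matrixP => i j; rewrite !mxE (inj_eq hinj).
Qed.

Lemma eigs_root (R : rcfType) n (M : 'M[R]_n) z :
  (z \in eigs M) = root (char_poly (cplx_mx M)) z.
Proof.
rewrite /eigs; case: closed_field_poly_normal => r /= E.
rewrite [in RHS]E rootZ ?root_prod_XsubC //.
by rewrite (monicP (char_poly_monic _)) oner_neq0.
Qed.

Lemma eigs_eq (R : rcfType) n m (M : 'M[R]_n) (N : 'M[R]_m) :
  char_poly M = char_poly N -> eigs M = eigs N.
Proof. by move=> E; rewrite /eigs /cplx_mx -!map_char_poly E. Qed.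

Lemma real_root_eigs (R : rcfType) n (M : 'M[R]_n) r :
  root (char_poly M) r -> real_complex R r \in eigs M.
Proof.
move=> H; rewrite eigs_root /cplx_mx -map_char_poly /root horner_map.
by move/eqP: H => ->; rewrite rmorph0.
Qed.

Lemma neg_right (R : rcfType) (p : {poly R}) :
  p.[0] < 0 -> exists2 x, 0 < x & p.[x] < 0.
Proof.
move=> H; have Hp : 0 < - p.[0] by rewrite oppr_gt0.
have [d d0 Hd] := poly_cont 0 p Hp.
have d2 : 0 < d / 2 by rewrite divr_gt0.
exists (d / 2) => //.
have := Hd (d / 2); rewrite subr0 gtr0_norm //.
have -> : d / 2 < d by lra.
move=> /(_ isT) /(le_lt_trans (ler_norm _)); lra.
Qed.

Lemma scalar0 (R : comNzRingType) n : (0 : R)%:M = 0 :> 'M_n.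
Proof. by apply/matrixP => i j; rewrite !mxE mul0rn. Qed.

Lemma core (R : rcfType) k (A : 'M[R]_k) (I : {set 'I_k}) :
  \det (- psub A I) < 0 ->
  exists d : 'rV[R]_k, (forall i, 0 < d 0 i) /\
    exists2 r, 0 < r & root (char_poly (A *m diag_mx d)) r.
Proof.
move=> Hdet.
set B := psub A I.
have q0 : (char_poly B).[0] < 0 by rewrite char_poly_horner scalar0 sub0r.
have [t0 t0pos qt0] := @neg_right _ _ q0.
pose dd (e : R) : 'rV[R]_k := \row_j (if j \in I then 1 else e).
pose P : {poly R} := \det (\matrix_(i, j)
   ((t0 *+ (i == j))%:P - (A i j)%:P * (if j \in I then 1 else 'X))).
have HP e : P.[e] = \det (t0%:M - A *m diag_mx (dd e)).
  rewrite -horner_evalE -det_map_mx; congr (\det _).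
  apply/matrixP => i j; rewrite mul_mx_diag !mxE /= horner_evalE.
  by case: (j \in I); rewrite hornerD hornerN hornerM !hornerC ?hornerX ?mulr1.
have P0 : P.[0] < 0.
  rewrite HP (@det_unitcols _ _ _ (~: I) t0).
    rewrite setCK.
    have -> : psub (t0%:M - A *m diag_mx (dd 0)) I = t0%:M - B.
      apply/matrixP => i j; rewrite mul_mx_diag !mxE (enum_valP j) mulr1.
      by rewrite (inj_eq enum_val_inj).
    by rewrite -char_poly_horner pmulr_rlt0 // exprn_gt0.
  move=> i j; rewrite inE => jI.
  by rewrite mul_mx_diag !mxE (negbTE jI) mulr0 subr0 mulr_natl.
have [e e0 Pe] := @neg_right _ _ P0.
have ddpos i : 0 < dd e 0 i by rewrite mxE; case: ifP.
exists (dd e); split => //.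
set p := char_poly (A *m diag_mx (dd e)).
have pt0 : p.[t0] < 0 by rewrite /p char_poly_horner -HP.
have lc : 0 < lead_coef p by rewrite (monicP (char_poly_monic _)) ltr01.
have [N0 HN0] := poly_pinfty_gt_lc lc.
set b := Num.max t0 N0.
have pb : 0 < p.[b].
  apply: (lt_le_trans lc); apply: HN0; by rewrite le_max lexx orbT.
have tb : t0 <= b by rewrite le_max lexx.
have hm : p.[t0] * p.[b] <= 0 by apply: ltW; rewrite pmulr_llt0.
have hm2 : p.[t0] <= 0 <= p.[b] by rewrite !ltW.
have [r rin rr] := @poly_ivt _ p t0 b tb hm2.
exists r => //; move: rin => /andP[h1 _].
exact: lt_le_trans t0pos h1.
Qed.

Lemma neg_det (R : rcfType) n (M : 'M[R]_n) z :
  is_eig M z -> Num.sg (\det M) = (-1) ^+ n.-1 -> \det (- M) < 0.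
Proof.
case: n M => [|n] M.
  by rewrite /is_eig eigenvalue_root_char /char_poly det_mx00 /root hornerC oner_eq0.
move=> _ Hs; rewrite -scaleN1r detZ -sgr_lt0 sgrM Hs sgrX sgrN1 /=.
by rewrite exprS mulN1r mulNr -expr2 sqrr_sign ltrN10.
Qed.

Lemma stable_det (R : rcfType) n (M : 'M[R]_n) :
  Hurwitz_stable M -> \det M != 0.
Proof.
move=> H; apply/negP => /eqP d0.
have : is_eig M 0.
  rewrite /is_eig eigenvalue_root_char /cplx_mx -map_char_poly /root.
  rewrite -(rmorph0 (real_complex R)) horner_map horner_coef0 char_poly_det d0.
  by rewrite mulr0 rmorph0.
by move/H; rewrite ltxx.
Qed.

Lemma transfer (R : rcfType) k (A : 'M[R]_k) (v : 'rV[R]_k) :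
  char_poly (psub A [set: 'I_k] *m diag_mx (\row_i v 0 (enum_val i)))
  = char_poly (A *m diag_mx v).
Proof.
have ecard : #|[set: 'I_k]| = k by rewrite cardsT card_ord.
have -> : psub A [set: 'I_k] *m diag_mx (\row_i v 0 (enum_val i)) =
   \matrix_(i, j) (A *m diag_mx v) (enum_val i) (enum_val j).
  by apply/matrixP => i j; rewrite !mul_mx_diag !mxE.
exact: char_poly_reindex ecard enum_val_inj.
Qed.

Theorem mainTheorem12 (R : rcfType) (nS nE k : nat)
    (s S : 'M[R]_(nS, nE)) (f : 'I_k -> 'I_nS) (g : 'I_k -> 'I_nE) :
  reaction_network s ->
  child_selection s f g ->
  Hurwitz_stable (CSmx S f g) ->
  (exists I : {set 'I_k}, unstable_positive_feedback (psub (CSmx S f g) I)) ->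
  DHopf (CSmx S f g).
Proof.
move=> _ _ Hst [I [[[z [Hz _]] _] Hsg]].
set A := CSmx S f g in Hst Hsg Hz *.
have [d' [d'pos [r r0 rr]]] := @core _ _ _ _ (neg_det Hz Hsg).
have ecard : #|[set: 'I_k]| = k by rewrite cardsT card_ord.
exists [set: 'I_k]; split.
  rewrite /psub (@det_reindex _ _ _ enum_val A ecard enum_val_inj).
  exact: stable_det.
exists (\row_i (const_mx 1 : 'rV[R]_k) 0 (enum_val i)), (\row_i d' 0 (enum_val i)).
split; first by move=> i; rewrite !mxE ltr01.
split; first by move=> i; rewrite mxE.
rewrite /inertia (eigs_eq (transfer _ A _)) (eigs_eq (transfer _ A _)).
rewrite diag_const_mx mulmx1.
move/(congr1 (fun t => t.1.2)) => /=.
have -> : count (fun z => 0 < complex.Re z) (eigs A) = 0%N.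
  rewrite (@eq_in_count _ _ pred0) ?count_pred0 // => w.
  rewrite eigs_root -eigenvalue_root_char => /Hst /= w0.
  by rewrite lt_gtF.
move=> E; have : has (fun z => 0 < complex.Re z) (eigs (A *m diag_mx d')).
  by apply/hasP; exists (real_complex R r); [exact: real_root_eigs | ].
by rewrite has_count -E.
Qed.
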